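(* Let $X$ be a real reflexive Banach space, $f:X\to\mathbb{R}\cup\{+\infty\}$ a lower semicontinuous proper convex function, $f^{FY}(x,x^{\ast}):=f(x)+f^{\ast}(x^{\ast})$, and let $h\in\mathcal{H}(\partial f)$ satisfy $h\le f^{FY}$. Then for every $(x,x^{\ast})\in X\times X^{\ast}$, $$h(x,x^{\ast})+h^{\ast}(x^{\ast},x)\ge\langle x,x^{\ast}\rangle+f(x)+f^{\ast}(x^{\ast}).$$
   Context: $X^{\ast}$ is the dual of $X$ with pairing $\langle\cdot,\cdot\rangle$; $f^{\ast}(x^{\ast})=\sup_x\{\langle x,x^{\ast}\rangle-f(x)\}$ and $\partial f$ is the convex subdifferential of $f$. The dual of $X\times X^{\ast}$ is identified with $X^{\ast}\times X$ via $\langle (x,x^{\ast}),(y^{\ast},y)\rangle=\langle x,y^{\ast}\rangle+\langle y,x^{\ast}\rangle$, and $h^{\ast}(y^{\ast},y)=\sup_{(x,x^{\ast})}\{\langle x,y^{\ast}\rangle+\langle y,x^{\ast}\rangle-h(x,x^{\ast})\}$. For a maximally monotone $T$, $\mathcal{H}(T)$ is the family of lower semicontinuous convex $h:X\times X^{\ast}\to\mathbb{R}\cup\{+\infty\}$ with $h(x,x^{\ast})\ge\langle x,x^{\ast}\rangle$ everywhere and equality whenever $x^{\ast}\in T(x)$. *)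

(* Defs.v *)
From HB Require Import structures.
From mathcomp Require Import all_boot all_order all_algebra.
From mathcomp Require Import all_classical all_reals all_analysis.
Set Implicit Arguments. Unset Strict Implicit. Unset Printing Implicit Defensive.
Import Order.TTheory GRing.Theory Num.Theory.
Import numFieldNormedType.Exports.
Local Open Scope classical_set_scope.
Local Open Scope ring_scope.
Local Open Scope ereal_scope.

Section Defs.
Variables (R : realType) (X : normedModType R).

(* The topological dual X^*: continuous linear functionals, represented as
   functions X -> R satisfying the predicate [is_dual]. *)
Definition is_dual (xs : X -> R) : Prop :=
  (forall (a : R) (x y : X), xs (a *: x + y)%R = (a * xs x + xs y)%R) /\
  continuous xs.

Definition dual_normle (xs : X -> R) (c : R) : Prop :=
  forall z : X, (`|xs z| <= c * `|z|)%R.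

(* Reflexivity: every continuous (= bounded w.r.t. the is_dual norm) linear
   functional on X^* is the evaluation at some point of X. *)
Definition reflexive_space : Prop :=
  forall phi : (X -> R) -> R,
    (forall (a : R) xs ys, is_dual xs -> is_dual ys ->
        phi (fun z => a * xs z + ys z)%R = (a * phi xs + phi ys)%R) ->
    (exists C : R, forall xs (c : R), is_dual xs -> (0 <= c)%R ->
        dual_normle xs c -> (`|phi xs| <= C * c)%R) ->
    exists x : X, forall xs, is_dual xs -> phi xs = xs x.

Definition no_minfty (f : X -> \bar R) : Prop := forall x, f x != -oo.
Definition proper_fun (f : X -> \bar R) : Prop :=
  no_minfty f /\ exists x, f x < +oo.
Definition convex_fun (f : X -> \bar R) : Prop :=
  forall (x y : X) (t : R), (0 < t < 1)%R ->
    f (t *: x + (1 - t) *: y)%R <= t%:E * f x + (1 - t)%R%:E * f y.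
Definition lsc_fun (f : X -> \bar R) : Prop :=
  forall (x : X) (t : R), t%:E < f x ->
    exists2 d : R, (0 < d)%R & forall y, (`|y - x| < d)%R -> t%:E < f y.

Definition conj_fun (f : X -> \bar R) (xs : X -> R) : \bar R :=
  ereal_sup [set (xs x)%:E - f x | x in [set: X]].

Definition subdiff (f : X -> \bar R) (x : X) (xs : X -> R) : Prop :=
  is_dual xs /\ f x \is a fin_num /\
  forall y : X, f x + (xs (y - x)%R)%:E <= f y.

(* Functions h : X x X^* -> R U {+oo}  (only values at is_dual xs matter) *)
Definition convex_fun2 (h : X -> (X -> R) -> \bar R) : Prop :=
  forall (x y : X) xs ys (t : R), is_dual xs -> is_dual ys -> (0 < t < 1)%R ->
    h (t *: x + (1 - t) *: y)%R (fun z => t * xs z + (1 - t) * ys z)%R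
      <= t%:E * h x xs + (1 - t)%R%:E * h y ys.
Definition lsc_fun2 (h : X -> (X -> R) -> \bar R) : Prop :=
  forall (x : X) xs (t : R), is_dual xs -> t%:E < h x xs ->
    exists2 d : R, (0 < d)%R & forall y ys, is_dual ys ->
      (`|y - x| < d)%R -> dual_normle (fun z => ys z - xs z)%R d ->
      t%:E < h y ys.

(* h^*(ys, y) with the is_dual of X x X^* identified with X^* x X *)
Definition conj_fun2 (h : X -> (X -> R) -> \bar R) (ys : X -> R) (y : X)
  : \bar R :=
  ereal_sup [set e | exists x xs, is_dual xs /\
                     e = (ys x + xs y)%:E - h x xs].

(* the family H(T) for a (maximally monotone) T given as a relation *)
Definition fitzfam (T : X -> (X -> R) -> Prop)
  (h : X -> (X -> R) -> \bar R) : Prop :=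
  convex_fun2 h /\ lsc_fun2 h /\
  (forall x xs, is_dual xs -> (xs x)%:E <= h x xs) /\
  (forall x xs, T x xs -> h x xs = (xs x)%:E).

End Defs.

(* Main.v *)
Require Import Defs.
From HB Require Import structures.
From mathcomp Require Import all_boot all_order all_algebra.
From mathcomp Require Import all_classical all_reals all_analysis.
From mathcomp Require Import ring lra.
Import Order.TTheory GRing.Theory Num.Theory.
Import numFieldNormedType.Exports.
Local Open Scope classical_set_scope.
Local Open Scope ring_scope.

Section HBsec.
Context {R : realType} {V : lmodType R} (p : V -> R).
Hypothesis p_add : forall u v, p (u + v) <= p u + p v.
Hypothesis p_hom : forall t v, 0 <= t -> p (t *: v) = t * p v.

Definition goodG (G : set (V * R)) :=
 [/\ G (0,0), (forall u r s, G (u,r) -> G (u,s) -> r = s),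
  (forall a u v r s, G (u,r) -> G (v,s) -> G (a *: u + v, a * r + s)) &
  (forall u r, G (u,r) -> r <= p u)].

Lemma goodZ G a u r : goodG G -> G (u, r) -> G (a *: u, a * r).
Proof.
case=> G0 _ Gc _ Gu; have := Gc a u 0 r 0 Gu G0; by rewrite addr0 addr0.
Qed.

Lemma extend1 A v : goodG A -> ~ (exists r, A (v, r)) ->
  exists A', [/\ goodG A', A `<=` A' & exists r, A' (v, r)].
Proof.
move=> gA nv; have [A0 Af Ac Ad] := gA.
have compat : forall u1 r1 u2 r2, A (u1, r1) -> A (u2, r2) ->
    r1 - p (u1 - v) <= p (u2 + v) - r2.
  move=> u1 r1 u2 r2 h1 h2.
  have h12 := Ac 1 u1 u2 r1 r2 h1 h2; rewrite scale1r mul1r in h12.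
  have := Ad _ _ h12.
  have -> : u1 + u2 = (u1 - v) + (u2 + v) by rewrite addrA (addrAC u1) subrK.
  move=> h; have := p_add (u1 - v) (u2 + v); lra.
pose Lo := [set x | exists u r, A (u, r) /\ x = r - p (u - v)].
have Lo0 : Lo !=set0 by exists (0 - p (0 - v)), 0, 0.
have Loub : forall u r, A (u, r) -> ubound Lo (p (u + v) - r).
  by move=> u r hu x [u1 [r1 [h1 ->]]]; apply: compat.
pose c := sup Lo.
have cle : forall u r, A (u, r) -> c <= p (u + v) - r.
  by move=> u r hu; apply: ge_sup => //; apply: Loub hu.
have cge : forall u r, A (u, r) -> r - p (u - v) <= c.
  move=> u r hu; apply: sup_upper_bound; last by exists u, r.
  by split => //; exists (p (0 + v) - 0); apply: Loub.
pose A' := [set z | exists u r t, A (u, r) /\ z = (u + t *: v, r + t * c)].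
exists A'; split; last first.
- by exists (0 + 1 * c); rewrite /A'; exists 0, 0, 1; split => //; rewrite !add0r scale1r.
- by move=> [u r] hu; rewrite /A'; exists u, r, 0; split => //; rewrite scale0r mul0r !addr0.
split.
- by exists 0, 0, 0; split => //; rewrite scale0r mul0r !addr0.
- move=> w r s [u1 [r1 [t1 [h1 [e1 e1']]]]] [u2 [r2 [t2 [h2 [e2 e2']]]]].
  have [t12|t12] := eqVneq t1 t2.
    subst t2; have : u1 = u2 by apply: (addIr (t1 *: v)); rewrite -e1 -e2.
    by move=> ?; subst u2; rewrite e1' e2' (Af _ _ _ h1 h2).
  exfalso; apply: nv.
  have hd := Ac (-1) u1 u2 r1 r2 h1 h2.
  have hk := goodZ _ ((t1 - t2)^-1) _ _ gA hd.
  exists ((t1 - t2)^-1 * (-1 * r1 + r2)).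
  suff -> : v = (t1 - t2)^-1 *: (-1 *: u1 + u2) by [].
  have e : u2 - u1 = (t1 - t2) *: v.
    by rewrite scalerBl -[u2](addrK (t2 *: v)) -e2 e1 -(addrA u1) (addrC u1) addrK.
  rewrite scaleN1r (addrC (- u1)) e scalerA mulVf ?scale1r //.
  by rewrite subr_eq0.
- move=> a w1 w2 r s [u1 [r1 [t1 [h1 [e1 e1']]]]] [u2 [r2 [t2 [h2 [e2 e2']]]]].
  exists (a *: u1 + u2), (a * r1 + r2), (a * t1 + t2); split.
    exact: Ac.
  rewrite e1 e2 e1' e2'; congr pair.
    by rewrite scalerDr scalerDl scalerA addrACA.
  by ring.
- move=> w r [u [r1 [t [h1 [e1 e1']]]]]; rewrite e1 e1' => {e1 e1'}.
  have [tlt|tgt|<-] := ltgtP 0 t; last first.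
  + by rewrite scale0r mul0r !addr0; apply: Ad.
  + have s0 : 0 < - t by rewrite oppr_gt0.
    have h := goodZ _ (- t)^-1 _ _ gA h1; have := cge _ _ h.
    have -> : (- t)^-1 *: u - v = (- t)^-1 *: (u + t *: v).
      rewrite scalerDr scalerA.
      have -> : (- t)^-1 * t = -1.
        by rewrite -[X in _ * X]opprK mulrN mulVf ?lt0r_neq0.
      by rewrite scaleN1r.
    rewrite p_hom; last by rewrite invr_ge0 ltW.
    move=> hc.
    have : (- t) * ((- t)^-1 * r1 - (- t)^-1 * p (u + t *: v)) <= (- t) * c.
      by rewrite ler_pM2l.
    by rewrite mulrBr !mulrA mulfV ?lt0r_neq0 // !mul1r; lra.
  + have h := goodZ _ t^-1 _ _ gA h1; have := cle _ _ h.
    have -> : t^-1 *: u + v = t^-1 *: (u + t *: v).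
      by rewrite scalerDr scalerA mulVf ?scale1r // lt0r_neq0.
    rewrite p_hom; last by rewrite invr_ge0 ltW.
    move=> hc.
    have : t * c <= t * (t^-1 * p (u + t *: v) - t^-1 * r1).
      by rewrite ler_pM2l.
    by rewrite mulrBr !mulrA mulfV ?gt_eqF // !mul1r; lra.
Qed.

Lemma HB_ext (G0 : set (V * R)) : goodG G0 ->
  exists L : V -> R, [/\ (forall a u v, L (a *: u + v) = a * L u + L v),
    (forall u, L u <= p u) & (forall u r, G0 (u, r) -> L u = r)].
Proof.
move=> g0.
pose P := fun A : set (V * R) => A = set0 \/ (goodG A /\ G0 `<=` A).
have [|A [PA maxA]] := @Zorn_bigcup (V * R)%type P.
  move=> F FP Ftot.
  have gM : forall M z, F M -> M z -> goodG M.
    move=> M z FM Mz; case: (FP M FM) => [M0|[]//].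
    by rewrite M0 in Mz.
  have [[M [FM [z Mz]]]|nF] := pselect (exists M, F M /\ M !=set0); last first.
    left; apply/seteqP; split => // z [M FM Mz]; apply: nF.
    by exists M; split => //; exists z.
  right; split; last first.
    by move=> y G0z; exists M => //; case: (FP M FM) => [M0|[_]]; [|apply];
      [rewrite M0 in Mz|].
  have [M0 Mf Mc Md] := gM _ _ FM Mz.
  split.
  - by exists M.
  - move=> u r s [M1 FM1 h1] [M2 FM2 h2].
    case: (Ftot M1 M2 FM1 FM2) => sub.
      by have [_ f _ _] := gM _ _ FM2 h2; apply: f (sub _ h1) h2.
    by have [_ f _ _] := gM _ _ FM1 h1; apply: f h1 (sub _ h2).
  - move=> a u v r s [M1 FM1 h1] [M2 FM2 h2].
    case: (Ftot M1 M2 FM1 FM2) => sub.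
      by have [_ _ c _] := gM _ _ FM2 h2; exists M2 => //; apply: c (sub _ h1) h2.
    by have [_ _ c _] := gM _ _ FM1 h1; exists M1 => //; apply: c h1 (sub _ h2).
  - move=> u r [M1 FM1 h1].
    by have [_ _ _ d] := gM _ _ FM1 h1; apply: d.
have [gA G0A] : goodG A /\ G0 `<=` A.
  case: PA => // A0; exfalso; apply: (maxA G0); last by right; split.
  rewrite A0; split => // h; have [g00 _ _ _] := g0.
  by have := h _ g00.
have tot : forall v, exists r, A (v, r).
  move=> v; apply: contrapT => nv.
  have [A' [gA' AA' [r A'v]]] := extend1 _ _ gA nv.
  apply: (maxA A'); last by right; split => //; apply: subset_trans AA'.
  split => // h; apply: nv; exists r; exact: h.
have [L HL] := choice tot.
have [A0 Af Ac Ad] := gA.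
exists L; split.
- by move=> a u v; apply: (Af _ _ _ (HL _)); apply: Ac.
- by move=> u; apply: Ad.
- by move=> u r h; apply: (Af _ _ _ (HL _)); apply: G0A.
Qed.
End HBsec.

Section Gauge.
Context {R : realType} {V : lmodType R} (C : set V) (N : V -> R).
Hypothesis Cconv : forall u v t, C u -> C v -> 0 < t < 1 -> C (t *: u + (1 - t) *: v).
Hypothesis Nge0 : forall v, 0 <= N v.
Hypothesis Cabs : forall v l, 0 < l -> N v < l -> C (l^-1 *: v).
Hypothesis N0 : N 0 = 0.

Let Sg v := [set l | 0 < l /\ C (l^-1 *: v)].
Let mu v := inf (Sg v).

Let C0 : C 0.
Proof. by have := @Cabs 0 1 ltr01; rewrite N0 scaler0; apply. Qed.

Let Sne v : Sg v !=set0.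
Proof.
exists (N v + 1); split; first by have := Nge0 v; lra.
by apply: Cabs; have := Nge0 v; lra.
Qed.

Let Slb v : has_lbound (Sg v).
Proof. by exists 0 => l [/ltW]. Qed.

Let mu_ge0 v : 0 <= mu v.
Proof. by apply: lb_le_inf => // l [/ltW]. Qed.

Let mu_le v l : Sg v l -> mu v <= l.
Proof. by move=> h; apply: ge_inf. Qed.

Let up v l l' : 0 < l -> l <= l' -> C (l^-1 *: v) -> C (l'^-1 *: v).
Proof.
move=> l0 ll' Cl; have [e|ne] := eqVneq l l'; first by rewrite -e.
have l'0 : 0 < l' by apply: lt_le_trans ll'.
have lt : l < l' by rewrite lt_neqAle ne.
have := Cconv (l^-1 *: v) 0 (l / l') Cl C0.
rewrite scaler0 addr0 scalerA.
have -> : l / l' * l^-1 = l'^-1.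
  by rewrite mulrC mulrA mulVf ?lt0r_neq0 // mul1r.
apply; apply/andP; split; first by rewrite divr_gt0.
by rewrite ltr_pdivrMr // mul1r.
Qed.

Let mu_lt1 v : mu v < 1 -> C v.
Proof.
move=> h; have [l [l0 Cl] l1] := inf_lt (Sne v) h.
by have := @up v l 1 l0 (ltW l1) Cl; rewrite invr1 scale1r.
Qed.

Let mu_leN v : mu v <= N v.
Proof.
apply/ler_addgt0Pr => e e0; apply: mu_le; split.
  by have := Nge0 v; lra.
by apply: Cabs; have := Nge0 v; lra.
Qed.

Let mu_Cle1 v : C v -> mu v <= 1.
Proof. by move=> h; apply: mu_le; split; rewrite ?invr1 ?scale1r. Qed.

Let hom_le t v : 0 < t -> mu (t *: v) <= t * mu v.
Proof.
move=> t0; rewrite -ler_pdivrMl //; apply: lb_le_inf => // l [l0 Cl].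
rewrite ler_pdivrMl //; apply: mu_le; split; first by rewrite mulr_gt0.
rewrite scalerA invfM mulrAC mulVf ?lt0r_neq0 // mul1r; exact: Cl.
Qed.

Let mu0 : mu 0 = 0.
Proof. by apply/le_anti; rewrite mu_ge0 andbT -N0 mu_leN. Qed.

Let mu_hom t v : 0 <= t -> mu (t *: v) = t * mu v.
Proof.
rewrite le_eqVlt => /orP [/eqP <-|t0]; first by rewrite scale0r mul0r mu0.
apply/le_anti; rewrite hom_le //=.
have := @hom_le t^-1 (t *: v); rewrite invr_gt0 => /(_ t0); rewrite scalerA mulVf ?lt0r_neq0 //.
by rewrite scale1r -ler_pdivrMl ?invr_gt0 // invrK mulrC.
Qed.

Let mu_add u v : mu (u + v) <= mu u + mu v.
Proof.
have key : forall l k, Sg u l -> Sg v k -> mu (u + v) <= l + k.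
  move=> l k [l0 Cl] [k0 Ck]; apply: mu_le; split; first by rewrite addr_gt0.
  have lk0 : 0 < l + k by rewrite addr_gt0.
  have := Cconv (l^-1 *: u) (k^-1 *: v) (l / (l + k)) Cl Ck.
  have -> : 1 - l / (l + k) = k / (l + k).
    by apply/eqP; rewrite subr_eq -mulrDl addrC divff ?lt0r_neq0.
  rewrite !scalerA.
  have -> : l / (l + k) * l^-1 = (l + k)^-1.
    by rewrite mulrC mulrA mulVf ?lt0r_neq0 // mul1r.
  have -> : k / (l + k) * k^-1 = (l + k)^-1.
    by rewrite mulrC mulrA mulVf ?lt0r_neq0 // mul1r.
  rewrite -scalerDr; apply; apply/andP; split; first by rewrite divr_gt0.
  by rewrite ltr_pdivrMr // mul1r ltrDl.
have h1 : forall k, Sg v k -> mu (u + v) - k <= mu u.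
  move=> k Sk; apply: lb_le_inf => // l Sl; have := key l k Sl Sk; lra.
have : mu (u + v) - mu u <= mu v.
  by apply: lb_le_inf => // k Sk; have := h1 k Sk; lra.
by rewrite lerBlDl addrC.
Qed.

Lemma gauge_sep w k : 0 < k < 1 -> ~ C (k *: w) ->
  exists L : V -> R, [/\ (forall a u v, L (a *: u + v) = a * L u + L v),
    (forall c, C c -> L c <= 1), k^-1 <= L w & (forall v, L v <= N v)].
Proof.
move=> /andP [k0 k1] nC.
pose G0 := [set z | exists t, z = (t *: w, t * mu w)].
have g0 : goodG mu G0.
  split.
  - by exists 0; rewrite scale0r mul0r.
  - move=> u r s [t1 [-> ->]] [t2 [e ->]].
    have [<-|ne] := eqVneq t1 t2; first by [].
    have : (t1 - t2) *: w == 0 by rewrite scalerBl e subrr.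
    rewrite scaler_eq0 subr_eq0 (negbTE ne) /= => /eqP ->.
    by rewrite mu0 !mulr0.
  - move=> a u v r s [t1 [-> ->]] [t2 [-> ->]]; exists (a * t1 + t2).
    by rewrite scalerDl scalerA mulrDl mulrA.
  - move=> u r [t [-> ->]]; have [t0|t0] := leP 0 t; first by rewrite mu_hom.
    by have := mu_ge0 w; have := mu_ge0 (t *: w); nra.
have [L [Llin Lle LG]] := @HB_ext R V mu mu_add mu_hom G0 g0.
exists L; split => //.
- by move=> c Cc; exact: le_trans (Lle c) (@mu_Cle1 c Cc).
- have -> : L w = mu w.
    by have := LG (1 *: w) (1 * mu w) (ex_intro _ 1 erefl); rewrite scale1r mul1r.
  have h : 1 <= mu (k *: w) by rewrite leNgt; apply/negP => /mu_lt1.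
  rewrite mu_hom in h; last exact: ltW.
  by rewrite -(ler_pM2l k0) mulfV ?lt0r_neq0.
- by move=> v; exact: le_trans (Lle v) (mu_leN v).
Qed.
End Gauge.

Section Aff.
Context {R : realType} {V : lmodType R}.
Lemma conv_comb (s : R) (e e' e0 b b' : V) :
  s *: (e - e0 + b) + (1 - s) *: (e' - e0 + b') =
  (s *: e + (1 - s) *: e') - e0 + (s *: b + (1 - s) *: b').
Proof.
rewrite !scalerDr !scalerN addrACA; congr (_ + _).
rewrite addrACA; congr (_ + _).
by rewrite -opprD -scalerDl addrC subrK scale1r.
Qed.
Lemma shift_id (k : R) (w e e0 b p0 : V) : w = p0 - e0 ->
  k *: w = e - e0 + b -> p0 - e = b + (1 - k) *: w.
Proof.
move=> -> h; rewrite scalerBl scale1r h !opprD !opprK [RHS]addrC -!addrA.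
by rewrite addNr addr0 (addrCA (- e0)) addNr addr0.
Qed.
End Aff.

Lemma linBg {R : realType} {V : lmodType R} (L : V -> R) :
  (forall a u v, L (a *: u + v) = a * L u + L v) ->
  forall u v, L (u - v) = L u - L v.
Proof.
move=> H u v; have := H (-1) v u; rewrite scaleN1r addrC => ->.
by rewrite mulN1r addrC.
Qed.

Section Epi.
Context {R : realType} {X : normedModType R}.
Local Notation V := (X * R^o)%type.

Definition bdl (phi : X -> R) :=
  (forall a x y, phi (a *: x + y) = a * phi x + phi y) /\
  exists K : R, forall y, `|phi y| <= K * `|y|.

Lemma pairdec (y : X) (t : R) : ((y, t) : V) = t *: ((0 : X), (1 : R^o)) + (y, 0 : R^o).
Proof.
rewrite [RHS]surjective_pairing /=; congr pair; first by rewrite scaler0 add0r.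
by rewrite addr0 /GRing.scale /= mulr1.
Qed.

Lemma pairlin (a : R) (x y : X) :
  ((a *: x + y, 0) : V) = a *: ((x, 0 : R^o) : V) + (y, 0 : R^o).
Proof.
rewrite [RHS]surjective_pairing /=; congr pair.
by rewrite addr0 /GRing.scale /= mulr0.
Qed.

Variable f : X -> \bar R.
Hypothesis fprop : proper_fun f.
Hypothesis fconv : convex_fun f.
Hypothesis flsc : lsc_fun f.

Lemma sep_epi x a : (a%:E < f x)%E -> exists phi beta eta,
  [/\ bdl phi, 0 < eta & forall y t, (f y <= t%:E)%E ->
       phi y + beta * t + eta <= phi x + beta * a].
Proof.
move=> ha.
have [delta [de0 dlt]] : exists delta, 0 < delta /\ ((a + delta)%:E < f x)%E.
  case E: (f x) ha => [r| |] ha.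
  - by exists ((r - a) / 2); rewrite lte_fin in ha; rewrite lte_fin; split; lra.
  - by exists 1; split => //; rewrite ltry.
  - by have := fprop.1 x; rewrite E.
have [d d0 hd] := flsc x (a + delta) dlt.
pose r := Num.min d delta / 2.
have r0 : 0 < r by rewrite divr_gt0 // lt_min d0.
have r2d : 2 * r <= d by rewrite /r mulrC divfK ?pnatr_eq0 // ge_min lexx.
have r2e : 2 * r <= delta by rewrite /r mulrC divfK ?pnatr_eq0 // ge_min lexx orbT.
clearbody r.
have [x1 fx1] := fprop.2.
pose t1 := fine (f x1).
have fx1e : f x1 = t1%:E.
  by rewrite /t1; move: fx1 (fprop.1 x1); case: (f x1).
pose e0 : V := (x1, t1).
pose p0 : V := (x, a).
pose w := p0 - e0.
pose nn (v : V) := `|v.1| + `|v.2|.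
have nn_ge0 v : 0 <= nn v by rewrite addr_ge0.
have nnD u v : nn (u + v) <= nn u + nn v.
  rewrite /nn /=; have := ler_normD u.1 v.1; have := ler_normD u.2 v.2; lra.
have nnZ (s : R) v : 0 <= s -> nn (s *: v) = s * nn v.
  move=> s0; rewrite /nn /= normrZ (ger0_norm s0).
  by rewrite /GRing.scale /= normrM (ger0_norm s0) mulrDr.
pose C := [set v : V | exists e b : V,
  [/\ (f e.1 <= e.2%:E)%E, nn b < r & v = e - e0 + b]].
pose N := fun v : V => nn v / r.
have Cconv : forall u v t, C u -> C v -> 0 < t < 1 -> C (t *: u + (1 - t) *: v).
  move=> u v s [e [b [fe nb ->]]] [e' [b' [fe' nb' ->]]] /andP [s0 s1].
  rewrite conv_comb; exists (s *: e + (1 - s) *: e'), (s *: b + (1 - s) *: b').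
  split => //.
  - have -> : (s *: e + (1 - s) *: e').1 = s *: e.1 + (1 - s) *: e'.1 by [].
    have -> : (s *: e + (1 - s) *: e').2 = s * e.2 + (1 - s) * e'.2 by [].
    apply: le_trans (fconv e.1 e'.1 s _) _; first by rewrite s0 s1.
    rewrite (EFinD (s * e.2) ((1 - s) * e'.2)) (EFinM s e.2) (EFinM (1 - s) e'.2); apply: leeD.
      by apply: lee_wpmul2l => //; rewrite lee_fin ltW.
    by apply: lee_wpmul2l => //; rewrite lee_fin subr_ge0 ltW.
  - apply: le_lt_trans (nnD _ _) _; rewrite !nnZ ?ltW ?subr_gt0 //.
    nra.
have Nge0 : forall v, 0 <= N v by move=> v; rewrite divr_ge0 // ltW.
have N0 : N 0 = 0 by rewrite /N /nn /= !normr0 addr0 mul0r.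
have Cabs : forall v l, 0 < l -> N v < l -> C (l^-1 *: v).
  move=> v l l0 Nl; exists e0, (l^-1 *: v); split.
  - by rewrite fx1e.
  - rewrite nnZ ?invr_ge0 ?ltW //.
    rewrite /N ltr_pdivrMr // in Nl.
    by rewrite -(ltr_pM2l l0) mulrA mulfV ?lt0r_neq0 // mul1r.
  - by rewrite subrr add0r.
pose M := nn w.
pose s := r / (r + 2 * (M + 1)).
have M0 : 0 <= M by apply: nn_ge0.
have s0 : 0 < s by rewrite divr_gt0 //; lra.
have s1 : s < 1 by rewrite ltr_pdivrMr; lra.
have sM : s * M < r.
  rewrite /s mulrAC ltr_pdivrMr; last lra.
  nra.
have nC : ~ C ((1 - s) *: w).
  move=> [e [b [fe nb eq]]].
  have := @shift_id _ _ (1 - s) w e e0 b p0 erefl eq; have e1s : 1 - (1 - s) = s by ring.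
  rewrite e1s => eq2.
  have : nn (p0 - e) < 2 * r.
    rewrite eq2; apply: le_lt_trans (nnD _ _) _; rewrite nnZ ?ltW // -/M; lra.
  rewrite /nn /= => hlt.
  have [hx|hx] := ltP `|x - e.1| d.
    have := hd e.1; rewrite distrC => /(_ hx) h.
    have := lt_le_trans h fe; rewrite lte_fin => h2.
    have : delta < `|a - e.2| by rewrite distrC ger0_norm; lra.
    have := normr_ge0 (x - e.1); lra.
  have := normr_ge0 (a - e.2); lra.
have k01 : 0 < 1 - s < 1 by apply/andP; split; lra.
have [L [Llin LC Lw LN]] := @gauge_sep R V C N Cconv Nge0 Cabs N0 w (1 - s) k01 nC.
pose phi := fun y : X => L (y, 0).
pose beta := L (0, 1).
have LB := @linBg R V L Llin.
have Ldec : forall y t, L (y, t) = phi y + beta * t.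
  by move=> y t; rewrite pairdec Llin addrC mulrC.
have Lk : 1 < (1 - s)^-1 by rewrite invf_gt1 //; lra.
exists phi, beta, ((1 - s)^-1 - 1); split.
- have philin : forall c u v, phi (c *: u + v) = c * phi u + phi v.
    by move=> c u v; rewrite /phi pairlin Llin.
  split => //.
  exists r^-1 => y.
  have hy : forall z, phi z <= r^-1 * `|z|.
    move=> z; apply: le_trans (LN _) _.
    by rewrite /N /nn /= normr0 addr0 mulrC.
  have phi0 : phi 0 = 0.
    by have := Llin 1 0 0; rewrite scale1r addr0 mul1r /phi => h; rewrite [LHS]/= ; lra.
  rewrite ler_norml hy andbT.
  have := hy (- y); rewrite normrN.
  have -> : phi (- y) = - phi y.
    by have := philin (-1) y 0; rewrite addr0 scaleN1r phi0 addr0 mulN1r.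
  lra.
- lra.
- move=> y t fyt.
  have h1 : L ((y, t) - e0 + 0) <= 1.
    apply: LC; exists (y, t), 0; split => //.
    by rewrite /nn /= !normr0 addr0.
  rewrite addr0 LB in h1.
  rewrite /w LB in Lw.
  rewrite -!Ldec; lra.
Qed.

Lemma bdl_scale c phi : bdl phi -> bdl (fun z => c * phi z).
Proof.
move=> [lin [K HK]]; split.
  by move=> a u v; rewrite lin; ring.
exists (`|c| * K) => y; rewrite normrM -mulrA ler_wpM2l //.
Qed.

Lemma bdl_add phi psi : bdl phi -> bdl psi -> bdl (fun z => phi z + psi z).
Proof.
move=> [lin [K HK]] [lin' [K' HK']]; split.
  by move=> a u v; rewrite lin lin'; ring.
exists (K + K') => y; rewrite mulrDl; apply: le_trans (ler_normD _ _) _.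
by apply: lerD.
Qed.

Lemma neg_case x a phi beta eta : bdl phi -> beta < 0 ->
  (forall y t, (f y <= t%:E)%E -> phi y + beta * t + eta <= phi x + beta * a) ->
  0 < eta -> exists ys, bdl ys /\ forall y, ((a + ys (y - x))%:E <= f y)%E.
Proof.
move=> bp b0 H e0; exists (fun z => (- beta)^-1 * phi z); split.
  exact: bdl_scale.
have nb : 0 < - beta by rewrite oppr_gt0.
move=> y; case E: (f y) => [t| |]; last by have := fprop.1 y; rewrite E.
  have := H y t; rewrite E lee_fin lexx => /(_ isT) h.
  rewrite lee_fin -(ler_pM2l nb) mulrDr mulrA mulfV ?lt0r_neq0 // mul1r.
  rewrite (linBg _ bp.1); lra.
by rewrite leey.
Qed.

Lemma minor x a : (a%:E < f x)%E ->
  exists ys, bdl ys /\ forall y, ((a + ys (y - x))%:E <= f y)%E.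
Proof.
move=> ha.
have [x1 fx1] := fprop.2.
pose t1 := fine (f x1).
have fx1e : f x1 = t1%:E.
  by rewrite /t1; move: fx1 (fprop.1 x1); case: (f x1).
have [phi [beta [eta [bp e0 H]]]] := sep_epi x a ha.
have ble : beta <= 0.
  rewrite leNgt; apply/negP => bgt.
  pose D := phi x + beta * a - phi x1 - beta * t1.
  have h : (f x1 <= (t1 + `|D| / beta)%:E)%E.
    by rewrite fx1e lee_fin lerDl divr_ge0 // ltW.
  have := H x1 _ h.
  rewrite mulrDr mulrCA mulfV ?lt0r_neq0 // mulr1.
  have := ler_norm D; rewrite /D; lra.
have [blt|beq] := ltP beta 0.
  exact: (@neg_case x a phi beta eta bp blt H e0).
have b0 : beta = 0 by apply/le_anti; rewrite ble beq.
have ht1 : ((t1 - 1)%:E < f x1)%E by rewrite fx1e lte_fin; lra.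
have [phi1 [beta1 [eta1 [bp1 e1 H1]]]] := sep_epi x1 (t1 - 1) ht1.
have b1 : beta1 < 0.
  have := H1 x1 t1; rewrite fx1e lexx => /(_ isT); rewrite mulrBr mulr1; lra.
have [ys1 [bys1 Hys1]] := @neg_case x1 (t1 - 1) phi1 beta1 eta1 bp1 b1 H1 e1.
pose D := a - (t1 - 1 + ys1 (x - x1)).
pose lam := `|D| / eta.
have lam0 : 0 <= lam by rewrite divr_ge0 // ltW.
have lamE : lam * eta = `|D| by rewrite /lam divfK ?lt0r_neq0.
exists (fun z => ys1 z + lam * phi z); split.
  by apply: bdl_add => //; apply: bdl_scale.
move=> y; case E: (f y) => [t| |]; last by have := fprop.1 y; rewrite E.
  have := H y t; rewrite E lexx b0 !mul0r !addr0 => /(_ isT) h.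
  have := Hys1 y; rewrite E lee_fin => h1.
  rewrite lee_fin (linBg _ bp.1) (linBg _ bys1.1).
  rewrite (linBg _ bys1.1) in h1.
  have h2 : lam * (phi y - phi x) <= - (lam * eta).
    by rewrite -mulrN ler_wpM2l //; lra.
  have := ler_norm D; rewrite -lamE /D (linBg _ bys1.1); lra.
by rewrite leey.
Qed.
End Epi.

Lemma bdl_dual {R : realType} {X : normedModType R} (phi : X -> R) :
  bdl phi -> is_dual phi.
Proof.
move=> [lin [K HK]]; split => // x.
apply/cvgrPdist_lt => e e0.
have K1 : 0 < `|K| + 1 by rewrite ltr_pwDr.
apply/nbhs_normP; exists (e / (`|K| + 1)) => /=; first by rewrite divr_gt0.
move=> y /= hy.
rewrite -(linBg _ lin); apply: le_lt_trans (HK _) _.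
apply: le_lt_trans (_ : (`|K| + 1) * `|x - y| < e).
  apply: ler_wpM2r => //; have := ler_norm K; lra.
by rewrite mulrC -ltr_pdivlMr.
Qed.

Lemma approx {R : realType} (u v z : \bar R) : u != -oo%E -> v != -oo%E ->
  (forall a b : R, (a%:E < u)%E -> (b%:E < v)%E -> ((a + b)%:E <= z)%E) -> (u + v <= z)%E.
Proof.
case: u => [u| |] // _; case: v => [v| |] // _ H.
- rewrite -EFinD; case: z H => [z| |] H.
  + rewrite lee_fin; apply/ler_addgt0Pr => e e0.
    have := H (u - e / 2) (v - e / 2); rewrite !lte_fin lee_fin.
    have h1 : u - e / 2 < u by lra.
    have h2 : v - e / 2 < v by lra.
    move=> /(_ h1 h2); lra.
  + exact: leey.
  + have h1 : ((u - 1)%:E < u%:E)%E by rewrite lte_fin; lra.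
    have h2 : ((v - 1)%:E < v%:E)%E by rewrite lte_fin; lra.
    by have := H _ _ h1 h2.
- case: z H => [z| |] H //=.
  + have h1 : ((u - 1)%:E < u%:E)%E by rewrite lte_fin; lra.
    have := H _ (z - u + 2) h1 (ltry _); rewrite lee_fin => hh; exfalso; clear -hh; lra.
  + have h1 : ((u - 1)%:E < u%:E)%E by rewrite lte_fin; lra.
    by have := H _ 0 h1 (ltry _).
- case: z H => [z| |] H //=.
  + have h2 : ((v - 1)%:E < v%:E)%E by rewrite lte_fin; lra.
    have := H (z - v + 2) _ (ltry _) h2; rewrite lee_fin => hh; exfalso; clear -hh; lra.
  + have h2 : ((v - 1)%:E < v%:E)%E by rewrite lte_fin; lra.
    by have := H 0 _ (ltry _) h2.
- case: z H => [z| |] H //=.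
  + have := H z 1 (ltry _) (ltry _); rewrite lee_fin => hh; exfalso; clear -hh; lra.
  + by have := H 0 0 (ltry _) (ltry _).
Qed.

Local Open Scope ereal_scope.

Theorem lemma4p1 (R : realType) (X : completeNormedModType R)
  (f : X -> \bar R) (h : X -> (X -> R) -> \bar R) :
  reflexive_space X ->
  proper_fun f -> convex_fun f -> lsc_fun f ->
  fitzfam (subdiff f) h ->
  (forall x xs, is_dual xs -> h x xs <= f x + conj_fun f xs) ->
  forall (x : X) (xs : X -> R), is_dual xs ->
    h x xs + conj_fun2 h xs x >= (xs x)%:E + f x + conj_fun f xs.
Proof.
move=> _ fprop fconv flsc [_ [_ [hge _]]] hle x xs dxs.
have [x1 fx1] := fprop.2.
pose t1 := fine (f x1).
have fx1e : f x1 = t1%:E.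
  by rewrite /t1; move: fx1 (fprop.1 x1); case: (f x1).
have FM : forall a : R, a%:E < f x ->
    exists ys, is_dual ys /\ conj_fun f ys <= (ys x - a)%:E.
  move=> a ha; have [ys [bys H]] := @minor R X f fprop fconv flsc x a ha.
  exists ys; split; first exact: bdl_dual.
  apply: ge_ereal_sup => _ [y _ <-].
  have := H y; case E: (f y) => [t| |] //=.
    by rewrite -EFinD !lee_fin (linBg _ bys.1); lra.
  by rewrite addeNy leNye.
have fsN : forall ys, conj_fun f ys != -oo.
  move=> ys; have : (ys x1)%:E - f x1 <= conj_fun f ys.
    by apply: ereal_sup_ubound; exists x1.
  by rewrite fx1e -EFinB; apply: contraTneq => ->.
rewrite -addeA; apply: leeD; first exact: hge.
apply: approx; [exact: fprop.1| exact: fsN|].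
move=> a b ha hb.
have [ys [dys hys]] := FM a ha.
have [_ [y _ <-] hy] := ereal_sup_gt hb.
move: hy; case E: (f y) => [fy| |] //=; last by have := fprop.1 y; rewrite E.
rewrite -EFinB lte_fin => hy.
move: hys (fsN ys) (hle y ys dys); rewrite E.
case: (conj_fun f ys) => [g| |] //= hg _ hh.
rewrite lee_fin in hg.
apply: le_trans (_ : (xs y + ys x)%:E - h y ys <= _); last first.
  by apply: ereal_sup_ubound; exists y, ys.
apply: le_trans (_ : ((xs y + ys x)%:E - (fy + g)%:E) <= _).
  by rewrite -EFinB lee_fin; lra.
by apply: leeD => //; rewrite leeN2 EFinD.
Qed.
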